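(* Let $\rho\in\mathcal{L}_{0}$ be positive, $\delta\in(0,\alpha]$ and $k\in\mathbb{N}^{+}$. Then there is a positive integer $M$ such that any $(\rho,\delta)$-lattice $\{w_{j}\}$ on $\mathbb{D}$ can be divided into $M$ subsequences with the property that if $w_{i}$ and $w_{j}$ are two different points in the same subsequence, then $|w_{i}-w_{j}|\geq2^{k}\delta\min(\rho(w_{i}),\rho(w_{j}))$.
   Context: $\mathbb{D}$ is the open unit disc. $C_0$ is the set of continuous $\rho$ on $\mathbb{D}$ with $\rho(z)\to0$ as $|z|\to1$. $\mathcal{L}$ is the set of real $\rho\in C_0$ with $\sup_{z\ne w}|\rho(z)-\rho(w)|/|z-w|<\infty$; $\mathcal{L}_0$ is the set of $\rho\in\mathcal{L}$ such that for every $\varepsilon>0$ there is a compact $E\subset\mathbb{D}$ with $|\rho(z)-\rho(w)|\le\varepsilon|z-w|$ for $z,w\in\mathbb{D}\setminus E$. $D^r(z)=D(z,r\rho(z))$ (Euclidean disc). There are constants $\alpha>0$, $s>0$ depending only on $\rho$ (with $\alpha$ fixed) such that for $0<r\le\alpha$ a $(\rho,r)$-lattice exists, where a $(\rho,r)$-lattice is a sequence $\{w_k\}\subset\mathbb{D}$ with $\mathbb{D}=\bigcup_kD^r(w_k)$, the discs $D^{sr}(w_k)$ pairwise disjoint, and $\{D^{2\alpha}(w_k)\}$ a covering of $\mathbb{D}$ of finite multiplicity. *)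

(* Defs.v *)
From HB Require Import structures.
From mathcomp Require Import all_boot all_order all_algebra.
From mathcomp Require Import all_classical all_reals topology normedtype.
Set Implicit Arguments. Unset Strict Implicit. Unset Printing Implicit Defensive.
Import Order.TTheory GRing.Theory Num.Theory numFieldNormedType.Exports.
Local Open Scope classical_set_scope.
Local Open Scope ring_scope.

Section Defs.
Variable R : realType.
Local Notation C := (R * R)%type.

Definition normc (z : C) : R := Num.sqrt (z.1 ^+ 2 + z.2 ^+ 2).
Definition distc (z w : C) : R := normc (z.1 - w.1, z.2 - w.2).

Definition inD : set C := [set z | normc z < 1].

Definition disc (c : C) (r : R) : set C := [set z | distc z c < r].

Definition Drho (rho : C -> R) (r : R) (z : C) : set C := disc z (r * rho z).

Definition C0 (rho : C -> R) : Prop :=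
  {within inD, continuous rho} /\
  (forall eps : R, 0 < eps -> exists eta : R, 0 < eta /\
     forall z, inD z -> 1 - eta < normc z -> `|rho z| < eps).

Definition Lclass (rho : C -> R) : Prop :=
  C0 rho /\
  exists L : R, forall z w, inD z -> inD w -> `|rho z - rho w| <= L * distc z w.

Definition L0class (rho : C -> R) : Prop :=
  Lclass rho /\
  forall eps : R, 0 < eps -> exists E : set C,
    compact E /\ E `<=` inD /\
    forall z w, inD z -> inD w -> ~ E z -> ~ E w ->
      `|rho z - rho w| <= eps * distc z w.

Definition lattice (rho : C -> R) (alpha s r : R) (w : nat -> C) : Prop :=
  [/\ (forall k, inD (w k)),
      (forall z, inD z <-> exists k, Drho rho r (w k) z),
      (forall i j, i <> j -> Drho rho (s * r) (w i) `&` Drho rho (s * r) (w j) = set0),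
      (forall z, inD z -> exists k, Drho rho (2 * alpha) (w k) z) &
      (exists N : nat, forall z, inD z -> forall l : seq nat, uniq l ->
          (forall k, k \in l -> Drho rho (2 * alpha) (w k) z) -> (size l <= N)%N)].
End Defs.

(* Main.v *)
Require Import Defs.
From HB Require Import structures.
From mathcomp Require Import all_boot all_order all_algebra.
From mathcomp Require Import all_classical all_reals topology normedtype.
From mathcomp Require Import ring lra.
Set Implicit Arguments. Unset Strict Implicit. Unset Printing Implicit Defensive.
Import Order.TTheory GRing.Theory Num.Theory numFieldNormedType.Exports.
Local Open Scope classical_set_scope.
Local Open Scope ring_scope.

Section Geo.
Variable R : realType.
Definition sqd (z w : R * R) := (z.1 - w.1) ^+ 2 + (z.2 - w.2) ^+ 2.
Lemma distcE z w : distc z w = Num.sqrt (sqd z w). Proof. by []. Qed.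
Lemma sqd_ge0 z w : 0 <= sqd z w. Proof. by rewrite /sqd addr_ge0 // sqr_ge0. Qed.
Lemma sqd_sym z w : sqd z w = sqd w z. Proof. rewrite /sqd; ring. Qed.
Lemma sqrt_ltE (a r : R) : 0 < r -> (Num.sqrt a < r) = (a < r ^+ 2).
Proof. move=> r0; by rewrite -{1}(ger0_norm (ltW r0)) -sqrtr_sqr ltr_sqrt // exprn_gt0. Qed.
Lemma sqrt_geE (a r : R) : 0 <= r -> 0 <= a -> (r <= Num.sqrt a) = (r ^+ 2 <= a).
Proof. move=> r0 a0; by rewrite -{1}(ger0_norm r0) -sqrtr_sqr ler_sqrt. Qed.

Variables (rho : R * R -> R) (s delta : R) (w : nat -> R * R).
Hypothesis s0 : 0 < s.
Hypothesis d0 : 0 < delta.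
Hypothesis Hrho : forall j, 0 < rho (w j).
Hypothesis Hdisj : forall i j, i <> j ->
  Drho rho (s * delta) (w i) `&` Drho rho (s * delta) (w j) = set0.

Lemma sep i j : i <> j -> (s * delta * (rho (w i) + rho (w j))) ^+ 2 <= sqd (w i) (w j).
Proof.
move=> ij; rewrite leNgt; apply/negP => H.
set r1 := s * delta * rho (w i); set r2 := s * delta * rho (w j).
have r10 : 0 < r1 by rewrite /r1 !mulr_gt0.
have r20 : 0 < r2 by rewrite /r2 !mulr_gt0.
have u0 : 0 < r1 + r2 by lra.
have {}H : sqd (w i) (w j) < (r1 + r2) ^+ 2 by rewrite /r1 /r2 -mulrDr.
set t := r1 / (r1 + r2).
have tu : t * (r1 + r2) = r1 by rewrite /t mulfVK // gt_eqF.
have tu' : (1 - t) * (r1 + r2) = r2 by rewrite mulrBl tu; ring.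
have t0 : 0 < t by rewrite /t divr_gt0.
have t1 : 0 < 1 - t by rewrite -(pmulr_lgt0 _ u0) tu'.
set z := ((w i).1 + t * ((w j).1 - (w i).1), (w i).2 + t * ((w j).2 - (w i).2)).
have : (Drho rho (s * delta) (w i) `&` Drho rho (s * delta) (w j)) z.
  split; rewrite /Drho /disc /= distcE sqrt_ltE ?mulr_gt0 //.
    have -> : sqd z (w i) = t ^+ 2 * sqd (w i) (w j) by rewrite /sqd /=; ring.
    by rewrite -/r1 -(ltr_pM2l (exprn_gt0 2 t0)) -!exprMn tu in H.
  have -> : sqd z (w j) = (1 - t) ^+ 2 * sqd (w i) (w j) by rewrite /sqd /=; ring.
  by rewrite -/r2 -(ltr_pM2l (exprn_gt0 2 t1)) -!exprMn tu' in H.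
by rewrite Hdisj.
Qed.

Lemma sq_le (x y : R) : 0 <= x -> x <= y -> x ^+ 2 <= y ^+ 2.
Proof. move=> *; nra. Qed.
Lemma sq_lt (x y : R) : 0 <= x -> 0 <= y -> x ^+ 2 < y ^+ 2 -> x < y.
Proof. move=> *; nra. Qed.

Variable K : R.
Hypothesis K0 : 0 < K.
Definition conf n j := distc (w n) (w j) < K * delta * Num.min (rho (w n)) (rho (w j)).
Definition PP := (Num.truncn (2 * K ^+ 2 / s ^+ 2)).+1.

Lemma nb_facts n j : j <> n -> conf n j ->
  [/\ sqd (w n) (w j) < (K * delta * rho (w n)) ^+ 2 &
      s * rho (w n) < K * rho (w j)].
Proof.
move=> jn; rewrite /conf distcE sqrt_ltE; last first.
  by rewrite !mulr_gt0 // lt_min !Hrho.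
have Hs := sep (nesym jn).
have := Hrho n; have := Hrho j; set a := rho (w n); set b := rho (w j) => b0 a0.
have m1 : Num.min a b <= a by rewrite ge_min lexx.
have m2 : Num.min a b <= b by rewrite ge_min lexx orbT.
have m0 : 0 < Num.min a b by rewrite lt_min a0 b0.
move=> H; split.
  apply: (lt_le_trans H); apply: sq_le; first by rewrite ltW // !mulr_gt0.
  by rewrite ler_pM2l // mulr_gt0.
have H2 : sqd (w n) (w j) < (K * delta * b) ^+ 2.
  apply: (lt_le_trans H); apply: sq_le; first by rewrite ltW // !mulr_gt0.
  by rewrite ler_pM2l // mulr_gt0.
have H3 : s * delta * (a + b) < K * delta * b.
  apply: sq_lt; rewrite ?ltW ?mulr_gt0 ?addr_gt0 //.
  by have := le_lt_trans Hs H2.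
have sb : 0 < s * delta * b by rewrite !mulr_gt0.
have : s * a * delta < K * b * delta by rewrite mulrDr in H3; lra.
by rewrite ltr_pM2r.
Qed.

Lemma sq_ltS (x y : R) : 0 <= x -> x < y -> x ^+ 2 < y ^+ 2.
Proof. move=> *; nra. Qed.

Lemma nb_bound n (l : seq nat) : uniq l ->
  (forall j, j \in l -> j <> n /\ conf n j) -> (size l <= PP * PP)%N.
Proof.
move=> ul Hl.
have rn0 := Hrho n; set rn := rho (w n) in rn0 *.
set R0 := K * delta * rn.
set h := s ^+ 2 * delta * rn / K.
have R00 : 0 < R0 by rewrite !mulr_gt0.
have h0 : 0 < h by rewrite divr_gt0 // !mulr_gt0 // exprn_gt0.
have E2 : 2 * R0 / h = 2 * K ^+ 2 / s ^+ 2.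
  rewrite /R0 /h; field; rewrite ?gt_eqF ?mulr_gt0 ?exprn_gt0 //.
have cell_lt : forall x : R, x ^+ 2 < R0 ^+ 2 -> (Num.truncn ((x + R0) / h) < PP)%N.
  move=> x Hx; rewrite /PP ltnS truncn_le_nat.
  apply: (le_lt_trans _ (truncnS_gt _)); rewrite -E2 ler_pM2r ?invr_gt0 //; nra.
have cell_ge : forall x : R, x ^+ 2 < R0 ^+ 2 -> 0 <= (x + R0) / h.
  move=> x Hx; rewrite divr_ge0 ?ltW //; nra.
have same : forall x y : R, x ^+ 2 < R0 ^+ 2 -> y ^+ 2 < R0 ^+ 2 ->
    Num.truncn ((x + R0) / h) = Num.truncn ((y + R0) / h) -> (x - y) ^+ 2 < h ^+ 2.
  move=> x y Hx Hy E.
  have := truncn_itv (cell_ge _ Hx); have := truncn_itv (cell_ge _ Hy).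
  rewrite E; set a := (Num.truncn _)%:R; rewrite -natr1 -/a.
  set u1 := (x + R0) / h; set u2 := (y + R0) / h => /andP [a1 a2] /andP [a3 a4].
  have -> : x - y = h * (u1 - u2) by rewrite /u1 /u2; field; rewrite gt_eqF.
  have : (u1 - u2) ^+ 2 < 1 by nra.
  move=> H; rewrite exprMn -[X in _ < X]mulr1 ltr_pM2l // exprn_gt0 //.
have facts : forall j, j \in l -> [/\ ((w j).1 - (w n).1) ^+ 2 < R0 ^+ 2,
    ((w j).2 - (w n).2) ^+ 2 < R0 ^+ 2 & h < s * delta * rho (w j)].
  move=> j /Hl [jn cj]; have [H1 H2] := nb_facts jn cj.
  rewrite /sqd -/rn -/R0 in H1.
  have q1 := sqr_ge0 ((w n).1 - (w j).1); have q2 := sqr_ge0 ((w n).2 - (w j).2).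
  split; [rewrite -sqrrN opprB; lra | rewrite -sqrrN opprB; lra | ].
  rewrite /h ltr_pdivrMr //.
  have : s * delta * (s * rn) < s * delta * (K * rho (w j)) by rewrite ltr_pM2l ?mulr_gt0.
  lra.
pose cell j := (Num.truncn (((w j).1 - (w n).1 + R0) / h),
                Num.truncn (((w j).2 - (w n).2 + R0) / h)).
have Hu : uniq (map cell l).
  rewrite map_inj_in_uniq // => j1 j2 H1 H2 [E1 E2'].
  apply/eqP/negPn/negP => /eqP ne.
  have [a1 b1 c1] := facts _ H1; have [a2 b2 c2] := facts _ H2.
  have X1 := same _ _ a1 a2 E1; have X2 := same _ _ b1 b2 E2'.
  have S := sep ne; rewrite /sqd in S.
  have : (2 * h) ^+ 2 < (s * delta * (rho (w j1) + rho (w j2))) ^+ 2.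
    apply: sq_ltS; first by rewrite ltW // mulr_gt0.
    rewrite mulrDr; lra.
  have e1 : (w j1).1 - (w n).1 - ((w j2).1 - (w n).1) = (w j1).1 - (w j2).1 by ring.
  have e2 : (w j1).2 - (w n).2 - ((w j2).2 - (w n).2) = (w j1).2 - (w j2).2 by ring.
  rewrite e1 in X1; rewrite e2 in X2.
  nra.
have Hs : {subset map cell l <= [seq (a, b) | a <- iota 0 PP, b <- iota 0 PP]}.
  move=> c /mapP [j Hj ->]; have [a1 b1 _] := facts _ Hj.
  by apply: allpairs_f; rewrite mem_iota /= ?cell_lt.
by have := uniq_leq_size Hu Hs; rewrite size_allpairs !size_iota size_map.
Qed.
End Geo.
Section Greedy.
Variable conf : nat -> nat -> bool.
Variable M : nat.

Definition newcol n (f : nat -> nat) :=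
  find (fun m => ~~ has (fun j => conf n j && (f j == m)) (iota 0 n)) (iota 0 M).

Fixpoint hcol n : nat -> nat :=
  match n with 0 => fun _ => 0%N
  | n'.+1 => fun j => if j == n' then newcol n' (hcol n') else hcol n' j end.

Definition col n := hcol n.+1 n.

Lemma hcol_stable m j : (j < m)%N -> hcol m j = col j.
Proof.
elim: m => [//|m IH] lt /=.
case: eqP => [->|ne]; first by rewrite /col /= eqxx.
apply: IH; rewrite ltnS leq_eqVlt in lt; case/orP: lt => // /eqP; done.
Qed.

Hypothesis Hbound : forall n, (size [seq j <- iota 0 n | conf n j] < M)%N.

Lemma col_spec n : (col n < M)%N /\
  forall j, (j < n)%N -> conf n j -> col n != col j.
Proof.
pose p := fun m => ~~ has (fun j => conf n j && (hcol n j == m)) (iota 0 n).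
have Hh : has p (iota 0 M).
  apply/negPn/negP => /hasPn H.
  have : (M <= size (map (hcol n) [seq j <- iota 0 n | conf n j]))%N.
    have -> : M = size (iota 0 M) by rewrite size_iota.
    apply: uniq_leq_size; first exact: iota_uniq.
    move=> m Hm; have := H m Hm; rewrite /p negbK => /hasP [j Hj /andP [cj /eqP <-]].
    by apply: map_f; rewrite mem_filter cj.
  by rewrite size_map leqNgt Hbound.
have Hc : col n = newcol n (hcol n) by rewrite /col /= eqxx.
have Hlt : (col n < M)%N by rewrite Hc /newcol -[X in (_ < X)%N](size_iota 0 M) -has_find.
split => //.
have := nth_find 0 Hh; rewrite -/(newcol n (hcol n)) -Hc nth_iota // add0n /p.
move=> /hasPn H j lt cj; apply/negP => /eqP E.
have := H j; rewrite mem_iota /= lt => /(_ isT); rewrite cj /= (hcol_stable lt) E eqxx //.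
Qed.
End Greedy.

Unset Implicit Arguments.
Theorem lemma5p6 (R : realType) (rho : R * R -> R) (alpha s delta : R) (k : nat) :
  L0class rho ->
  (forall z, inD z -> 0 < rho z) ->
  0 < alpha -> 0 < s ->
  (forall r, 0 < r <= alpha -> exists w, lattice rho alpha s r w) ->
  0 < delta <= alpha -> (0 < k)%N ->
  exists M : nat, (0 < M)%N /\
    forall w : nat -> R * R, lattice rho alpha s delta w ->
    exists c : nat -> 'I_M, forall i j, i <> j -> c i = c j ->
      2 ^+ k * delta * Num.min (rho (w i)) (rho (w j)) <= distc (w i) (w j).
Proof.
move=> _ Hpos a0 s0 _ /andP [d0 _] _.
have K0 : 0 < (2 : R) ^+ k by rewrite exprn_gt0.
set K := (2 : R) ^+ k in K0 *.
exists (PP s K * PP s K).+1; split => // w [Hw _ Hdisj _ _].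
have Hrho : forall j, 0 < rho (w j) by move=> j; apply: Hpos.
set cf := conf rho delta w K.
have Hb : forall n, (size [seq j <- iota 0 n | cf n j] < (PP s K * PP s K).+1)%N.
  move=> n; rewrite ltnS; apply: (nb_bound s0 d0 Hrho Hdisj K0 (n:=n)).
    by rewrite filter_uniq // iota_uniq.
  move=> j; rewrite mem_filter mem_iota /= => /andP [cj lt]; split => //.
  by move=> E; move: lt; rewrite E /= add0n ltnn ?andbF.
exists (fun n => inord (col cf (PP s K * PP s K).+1 n)).
have key : forall i j, (j < i)%N -> col cf (PP s K * PP s K).+1 i = col cf (PP s K * PP s K).+1 j ->
    K * delta * Num.min (rho (w i)) (rho (w j)) <= distc (w i) (w j).
  move=> i j lt E; have [_ H] := col_spec Hb i.
  rewrite leNgt; apply/negP => cij; have := H j lt cij; by rewrite E eqxx.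
move=> i j ij E.
have Hlt n := (col_spec Hb n).1.
have E' : col cf (PP s K * PP s K).+1 i = col cf (PP s K * PP s K).+1 j.
  by have := congr1 val E; rewrite /= !inordK ?Hlt.
case: (ltngtP i j) => [lt|lt|eq]; last by [].
  have mC : Num.min (rho (w i)) (rho (w j)) = Num.min (rho (w j)) (rho (w i)) by exact: minC.
  rewrite mC distcE sqd_sym -distcE; apply: (key j i lt); exact: esym.
exact: (key i j lt).
Qed.
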